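(* Let $\mathcal H$ be a separable Hilbert space, let $(X,\mu)$ be a measure space, and let $\{\phi_t\}_{t\in X}$ be a continuous Bessel family over $X$ in $\mathcal H$. Then its support $\{t\in X: \phi_t\neq 0\}$ is a $\sigma$-finite subset of $X$, i.e. a countable union of measurable sets of finite measure.
   Context: A family $\{\phi_t\}_{t\in X}$ of vectors in $\mathcal H$ is a continuous Bessel family (with bound $B$) over the measure space $(X,\mu)$ if (i) for each $f\in\mathcal H$ the function $t\mapsto\langle f,\phi_t\rangle$ is measurable, and (ii) there is $B<\infty$ with $\int_X|\langle f,\phi_t\rangle|^2\,d\mu(t)\le B\|f\|^2$ for all $f\in\mathcal H$. *)

(* Defs.v *)
From HB Require Import structures.
From mathcomp Require Import all_boot all_order all_algebra.
From mathcomp Require Import all_classical all_reals all_analysis.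
From mathcomp Require Import complex.
Set Implicit Arguments. Unset Strict Implicit. Unset Printing Implicit Defensive.
Import Order.TTheory GRing.Theory Num.Theory.
Local Open Scope ring_scope.
Local Open Scope classical_set_scope.

Definition is_inner_product (R : realType) (H : lmodType R[i])
    (ip : H -> H -> R[i]) : Prop :=
  [/\ (forall (a : R[i]) (x y z : H), ip (a *: x + y) z = a * ip x z + ip y z),
      (forall x y : H, ip y x = (ip x y)^*),
      (forall x : H, 0 <= complex.Re (ip x x)) &
      (forall x : H, ip x x = 0 -> x = 0)].

Definition hnorm (R : realType) (H : lmodType R[i]) (ip : H -> H -> R[i])
    (x : H) : R :=
  Num.sqrt (complex.Re (ip x x)).

Definition hcomplete (R : realType) (H : lmodType R[i])
    (ip : H -> H -> R[i]) : Prop :=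
  forall u : nat -> H,
    (forall e : R, 0 < e -> exists N : nat, forall m n : nat,
        (N <= m)%N -> (N <= n)%N -> hnorm ip (u m - u n) < e) ->
    exists x : H, forall e : R, 0 < e -> exists N : nat, forall n : nat,
        (N <= n)%N -> hnorm ip (u n - x) < e.

Definition hseparable (R : realType) (H : lmodType R[i])
    (ip : H -> H -> R[i]) : Prop :=
  exists D : nat -> H, forall (x : H) (e : R), 0 < e ->
    exists n : nat, hnorm ip (x - D n) < e.

Definition hilbert_space (R : realType) (H : lmodType R[i])
    (ip : H -> H -> R[i]) : Prop :=
  is_inner_product ip /\ hcomplete ip.

Definition csq (R : realType) (z : R[i]) : R :=
  complex.Re z ^+ 2 + complex.Im z ^+ 2.

(* Continuous Bessel family {phi_t}_{t in X} over (X, mu) in H.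
   (i) measurability of t |-> <f, phi_t> (i.e. of its real and imaginary
       parts, R[i] being identified with R^2 with its Borel structure);
   (ii) there is a finite B with  int_X |<f,phi_t>|^2 dmu <= B ||f||^2. *)
Definition continuous_bessel_family (R : realType) (H : lmodType R[i])
    (ip : H -> H -> R[i]) (d : measure_display) (X : measurableType d)
    (mu : {measure set X -> \bar R}) (phi : X -> H) : Prop :=
  (forall f : H,
      measurable_fun setT (fun t => complex.Re (ip f (phi t))) /\
      measurable_fun setT (fun t => complex.Im (ip f (phi t)))) /\
  exists B : R, forall f : H,
    (\int[mu]_(t in setT) (csq (ip f (phi t)))%:E
       <= (B * hnorm ip f ^+ 2)%:E)%E.

(* Main.v *)
Require Import Defs.
From HB Require Import structures.
From mathcomp Require Import all_boot all_order all_algebra.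
From mathcomp Require Import all_classical all_reals all_analysis.
From mathcomp Require Import complex.
From mathcomp Require Import ring lra measurable_realfun.
Import Order.TTheory GRing.Theory Num.Theory.
Local Open Scope ring_scope.
Local Open Scope classical_set_scope.

Lemma nonzero_coef (R : realType) (H : lmodType R[i])
    (ip : H -> H -> R[i]) (D : nat -> H) :
  is_inner_product ip ->
  (forall (x : H) (e : R), 0 < e -> exists n : nat, hnorm ip (x - D n) < e) ->
  forall p : H, p != 0 -> exists n, ip (D n) p != 0.
Proof.
case=> lin csym pos def Hd p p0.
apply/not_existsP => /= hall.
have hz n : ip (D n) p = 0 by apply/eqP/negPn/negP; exact: hall n.
have subl x y z : ip (x - y) z = ip x z - ip y z.
  by rewrite addrC -scaleN1r lin mulN1r addrC.
have hpp : ip p p != 0 by apply/negP => /eqP /def /eqP; rewrite (negbTE p0).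
have imz : complex.Im (ip p p) = 0.
  have := csym p p; case: (ip p p) => a b /=.
  move=> /(congr1 (@complex.Im R)) /=; lra.
have hre : 0 < complex.Re (ip p p).
  rewrite lt_neqAle pos andbT; apply/negP => /eqP re0.
  move: hpp; case E: (ip p p) => [a b]; move: re0 imz; rewrite E /= => <- ->.
  by rewrite eqxx.
have [n hn] := Hd p (Num.sqrt (complex.Re (ip p p))) ltac:(by rewrite sqrtr_gt0).
move: hn; rewrite /hnorm ltr_sqrt; last first.
  by rewrite lt_neqAle pos andbT; apply/negP => /eqP re0; move: hre; rewrite re0 ltxx.
have e1 : ip (p - D n) (p - D n) = ip p p + ip (D n) (D n).
  have sub2 x y z : ip z (x - y) = ip z x - ip z y.
    by rewrite csym subl rmorphB /= -!csym.
  rewrite subl !sub2 hz.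
  have : ip p (D n) = 0 by rewrite csym hz conjC0.
  by move=> ->; rewrite subr0 sub0r opprK.
rewrite e1 raddfD /=.
have := pos (D n); lra.
Qed.

Lemma csq_ge0 (R : realType) (z : R[i]) : 0 <= csq z.
Proof. by rewrite /csq addr_ge0 // sqr_ge0. Qed.

Lemma csq_gt0 (R : realType) (z : R[i]) : z != 0 -> 0 < csq z.
Proof.
move=> hz; rewrite lt_neqAle csq_ge0 andbT; apply: contra hz.
case: z => a b; rewrite /csq /= eq_sym paddr_eq0 ?sqr_ge0 // !sqrf_eq0.
by case/andP => /eqP -> /eqP ->.
Qed.

Definition Fset {R : realType} {H : lmodType R[i]} (ip : H -> H -> R[i])
  {X : Type} (phi : X -> H) (D : nat -> H) (m : nat) : set X :=
  match (unpickle m : option (nat * nat)) with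
  | Some (n, k) => [set t | (k.+1%:R)^-1 < csq (ip (D n) (phi t))]
  | None => set0
  end.

Theorem proposition2p1 (R : realType) (H : lmodType R[i])
    (ip : H -> H -> R[i]) (d : measure_display) (X : measurableType d)
    (mu : {measure set X -> \bar R}) (phi : X -> H) :
  hilbert_space ip -> hseparable ip ->
  continuous_bessel_family ip mu phi ->
  exists F : nat -> set X,
    (forall n : nat, measurable (F n) /\ (mu (F n) < +oo)%E) /\
    [set t | phi t != 0] = \bigcup_n F n.
Proof.
move=> [hip _] [D hD] [hm [B hB]].
exists (Fset ip phi D); split.
  move=> m; rewrite /Fset; case: (unpickle m) => [[n k]|]; last first.
    by split; [exact: measurable0|rewrite measure0].
  have mg : measurable_fun setT (fun t => csq (ip (D n) (phi t))).
    rewrite /csq; have [h1 h2] := hm (D n).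
    by apply: measurable_funD; apply: measurable_funX.
  have mF : measurable [set t | (k.+1%:R)^-1 < csq (ip (D n) (phi t))].
    have := mg measurableT `](k.+1%:R)^-1, +oo[%classic (measurable_itv _).
    rewrite setTI; congr measurable; apply/seteqP; split => t /=;
      by rewrite in_itv /= andbT.
  split => //.
  set c := (k.+1%:R)^-1 : R.
  have c0 : 0 < c by rewrite invr_gt0.
  have le1 : (c%:E * mu [set t | (c < csq (ip (D n) (phi t)))%R] <=
      (B * hnorm ip (D n) ^+ 2)%:E)%E.
    rewrite -integral_cst //.
    apply: le_trans (hB (D n)).
    apply: le_trans; last first.
      apply: (@ge0_subset_integral _ _ _ mu _ _ mF measurableT).
      - exact: measurableT_comp.
      - by move=> x _; rewrite lee_fin csq_ge0.
      - by [].
    apply: ge0_le_integral => //.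
    - by move=> x _; rewrite lee_fin ltW.
    - apply: measurableT_comp => //; exact: measurable_funS mg.
    - by move=> x /= hx; rewrite lee_fin ltW.
  move: le1; case E: (mu _) => [r| |].
  - by move=> _; rewrite ltry.
  - by rewrite gt0_muley ?lte_fin // leye_eq.
  - by [].
apply/seteqP; split => t /=.
  move=> pt; have [n hn] := @nonzero_coef _ _ ip D hip hD _ pt.
  have [k hk] := ltr_add_invr (@csq_gt0 _ _ hn); rewrite add0r in hk.
  by exists (pickle (n, k)) => //; rewrite /Fset pickleK.
case=> m _; rewrite /Fset; case: (unpickle m) => [[n k]|] //= h.
apply/negP => /eqP pt0; move: h; rewrite pt0.
have -> : ip (D n) 0 = 0.
  case: hip => lin csym _ _.
  have := lin (-1) 0 0 (D n); rewrite scaleN1r oppr0 add0r mulN1r addNr => e.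
  by rewrite csym e conjC0.
rewrite /csq /= expr0n /= addr0; apply/negP; rewrite -leNgt ltW // invr_gt0.
by rewrite ltr0Sn.
Qed.
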